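(* Let $k$ be a field, $d>0$ an integer that is not a multiple of the characteristic of $k$, and $a_1,\ldots,a_n\in k$ all nonzero. Then the diagonal form $a_1x_1^d+\cdots+a_nx_n^d\in k[x_1,\ldots,x_n]$ has strength at least $n/2$.
   Context: For a homogeneous polynomial $f$ of degree $d>0$ over $k$, $\operatorname{str}(f)$ is the minimal $s\ge 0$ such that $f=g_1h_1+\cdots+g_sh_s$ with $g_i,h_i$ homogeneous polynomials over $k$ of degrees $<d$ ($\infty$ if no such expression exists). *)

(* Defs.v *)
From HB Require Import structures.
From mathcomp Require Import all_boot all_order all_algebra.
From mathcomp Require Import mpoly.
Set Implicit Arguments. Unset Strict Implicit. Unset Printing Implicit Defensive.
Import GRing.Theory.
Local Open Scope ring_scope.

(* p is a homogeneous polynomial of (total) degree e (the zero polynomial is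
   homogeneous of every degree, as usual). *)
Definition is_homog_deg (n : nat) (k : ringType) (e : nat) (p : {mpoly k[n]}) : bool :=
  p \is ishomog1 e (@mdeg n).

(* f = g_1 h_1 + ... + g_s h_s with all g_i, h_i homogeneous of degree < d.
   str(f) is the minimal such s (infinity if none exists); hence
   "str(f) >= r" means: every such decomposition has s >= r. *)
Definition str_decomp (n : nat) (k : ringType) (d : nat) (f : {mpoly k[n]}) (s : nat) : Prop :=
  exists (g h : 'I_s -> {mpoly k[n]}),
    (forall i, exists e, (e < d)%N /\ is_homog_deg e (g i)) /\
    (forall i, exists e, (e < d)%N /\ is_homog_deg e (h i)) /\
    f = \sum_(i < s) g i * h i.

Definition diag_form (n : nat) (k : ringType) (d : nat) (a : 'I_n -> k) : {mpoly k[n]} :=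
  \sum_(i < n) a i *: 'X_i ^+ d.

(* Main.v *)
Require Import Defs.
From HB Require Import structures.
From mathcomp Require Import all_boot all_order all_algebra.
From mathcomp Require Import mpoly.
From mathcomp Require Import zify.
Import GRing.Theory.
Set Implicit Arguments. Unset Strict Implicit. Unset Printing Implicit Defensive.
Definition Sf (f : nat -> nat) (x : nat) : nat := (\sum_(0 <= D < x.+1) f D)%N.

Lemma Sf0 f : Sf f 0 = f 0.
Proof. by rewrite /Sf big_nat1. Qed.

Lemma SfS f x : Sf f x.+1 = (Sf f x + f x.+1)%N.
Proof. by rewrite /Sf big_nat_recr. Qed.

Lemma Sf_idx f y x : (y <= x)%N -> (Sf f y <= Sf f x)%N.
Proof.
move=> hyx; elim: x hyx => [|x IH]; first by rewrite leqn0 => /eqP ->.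
rewrite leq_eqVlt => /orP [/eqP -> //|]; rewrite ltnS => /IH h.
by rewrite SfS; apply: leq_trans h (leq_addr _ _).
Qed.

Lemma Sf_mono f g x : (forall D, (D <= x)%N -> (f D <= g D)%N) -> (Sf f x <= Sf g x)%N.
Proof.
elim: x => [|x IH] h; first by rewrite !Sf0 h.
rewrite !SfS leq_add //; first by apply: IH => D hD; apply: h; apply: leq_trans hD _.
exact: h.
Qed.

Lemma Sf_const f c x : (forall D, (D <= x)%N -> (f D <= c)%N) -> (Sf f x <= x.+1 * c)%N.
Proof.
elim: x => [|x IH] h; first by rewrite Sf0 mul1n h.
rewrite SfS mulSn addnC leq_add //; first exact: h.
by apply: IH => D hD; apply: h; apply: leq_trans hD _.
Qed.

Lemma iter_mono j f g x : (forall D, (D <= x)%N -> (f D <= g D)%N) ->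
  (iter j Sf f x <= iter j Sf g x)%N.
Proof.
elim: j x => [|j IH] x h /=; first exact: h.
apply: Sf_mono => D hD; apply: IH => D' hD'; apply: h; apply: leq_trans hD' hD.
Qed.

Lemma leq_expn m1 m2 j : (m1 <= m2)%N -> (m1 ^ j <= m2 ^ j)%N.
Proof. by move=> h; elim: j => [|j IH]; rewrite ?expn0 // !expnS leq_mul. Qed.

Lemma iter_bound j f B x : (forall D, (D <= x)%N -> (f D <= B)%N) ->
  (iter j Sf f x <= B * x.+1 ^ j)%N.
Proof.
elim: j x => [|j IH] x h /=; first by rewrite expn0 muln1; exact: h.
apply: leq_trans (Sf_const (c := B * x.+1 ^ j) _) _.
  move=> D hD; apply: leq_trans (IH D _) _.
    by move=> D' hD'; apply: h; apply: leq_trans hD' hD.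
  by rewrite leq_mul2l leq_expn ?orbT.
by rewrite expnS mulnCA.
Qed.

Lemma S_step (f g : nat -> nat) e N : (0 < e)%N ->
  (forall D, (D <= N)%N -> (e <= D)%N -> (f D <= g D + f (D - e))%N) ->
  (forall D, (D <= N)%N -> (D < e)%N -> (f D <= g D)%N) ->
  forall x, (x <= N)%N -> (f x <= Sf g x)%N.
Proof.
move=> he h1 h2.
have claim : forall x, (x <= N)%N ->
    (Sf f x <= Sf g x + (if (e <= x)%N then Sf f (x - e) else 0))%N.
  elim=> [|x IH] hx.
    have -> : (e <= 0)%N = false by move: he; clear; move=> *; lia.
    by rewrite !Sf0 addn0; apply: h2.
  have IH' := IH (ltnW hx); rewrite !SfS.
  case: (leqP e x.+1) => hex.
    have := h1 _ hx hex.
    case: (leqP e x) => hex' in IH' *.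
      have -> : (x.+1 - e = (x - e).+1)%N by move: hex'; clear; move=> *; lia.
      rewrite SfS; move: IH'; clear; move=> *; lia.
    have -> : (x.+1 - e = 0)%N by move: hex'; clear; move=> *; lia.
    rewrite Sf0; move: IH'; clear; move=> *; lia.
  have := h2 _ hx hex.
  have hf : (e <= x)%N = false by move: hex; clear; move=> *; lia.
  rewrite hf in IH'; move: IH'; rewrite !addn0; clear; move=> *; lia.
move=> x hx; have := claim x hx.
case: (leqP e x) => hex; last first.
  by rewrite addn0 => h; apply: leq_trans h; case: x {hx hex} => [|x]; rewrite ?Sf0 ?SfS ?leq_addl.
case: x hx hex => [|x] hx hex; first by move: he hex; clear; move=> *; lia.
have hi := @Sf_idx f (x.+1 - e) x (ltac:(move: he; clear; move=> *; lia)).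
rewrite SfS; move: hi; clear; move=> *; lia.
Qed.

Local Open Scope ring_scope.


Section Core.
Variables (k : fieldType) (n N : nat).
Local Notation M := ('X_{1..n < N.+1}).
Local Notation K := #|{: M}|.
Local Notation V := 'rV[k]_K.

Definition allM : seq M := enum (@predT M).
Definition coef (q : {mpoly k[n]}) : V := \row_(i < K) q@_(bmnm (enum_val i : M)).
Definition poly_of (v : V) : {mpoly k[n]} := \sum_(m : M) v 0 (enum_rank m) *: 'X_[bmnm m].

Lemma coef_is_linear : linear coef.
Proof. by move=> c p q; apply/rowP=> i; rewrite !mxE mcoeffD mcoeffZ. Qed.
HB.instance Definition _ := GRing.isLinear.Build k {mpoly k[n]} V _ coef coef_is_linear.

Lemma poly_of_is_linear : linear poly_of.
Proof.
move=> c u v; rewrite /poly_of scaler_sumr -big_split /=; apply: eq_bigr => m _.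
by rewrite !mxE scalerDl scalerA.
Qed.
HB.instance Definition _ := GRing.isLinear.Build k V {mpoly k[n]} _ poly_of poly_of_is_linear.

Lemma poly_ofK (q : {mpoly k[n]}) : (msize q <= N.+1)%N -> poly_of (coef q) = q.
Proof.
move=> hq; rewrite [RHS](mpolywE hq) /poly_of; apply: eq_bigr => m _.
by rewrite mxE enum_rankK.
Qed.

Lemma coefK v : coef (poly_of v) = v.
Proof.
apply/matrixP=> i0 i; rewrite mxE /poly_of raddf_sum /= (bigD1 (enum_val i)) //=.
rewrite big1 ?addr0; last first.
  move=> m ne; rewrite mcoeffZ mcoeffX.
  by rewrite -bmeqP (negbTE ne) mulr0.
by rewrite mcoeffZ mcoeffX eqxx mulr1 enum_valK; move=> /=; rewrite [i0]ord1.
Qed.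

Definition mulc (p : {mpoly k[n]}) (v : V) : V := coef (p * poly_of v).
Lemma mulc_is_linear p : linear (mulc p).
Proof. by move=> c u v; rewrite /mulc linearP /= mulrDr -scalerAr linearP. Qed.
HB.instance Definition _ p := GRing.isLinear.Build k V V _ (mulc p) (mulc_is_linear p).
Definition phi p : 'End(V) := linfun (mulc p).

Definition P D : {vspace V} :=
  <<[seq coef 'X_[bmnm m] | m <- allM & (mdeg (bmnm m) <= D)%N]>>%VS.
Definition gens (p : {mpoly k[n]}) e D : seq V :=
  if (e <= D)%N then [seq coef (p * 'X_[bmnm m]) | m <- allM & (mdeg (bmnm m) <= D - e)%N]
  else [::].
Definition W (ps : seq ({mpoly k[n]} * nat)) D : {vspace V} :=
  <<flatten [seq gens pe.1 pe.2 D | pe <- ps]>>%VS.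

Lemma coef_in_P (q : {mpoly k[n]}) D : (D <= N)%N -> (msize q <= D.+1)%N -> coef q \in P D.
Proof.
move=> hD hq; have hq' : (msize q <= N.+1)%N by apply: leq_trans hq _.
rewrite (mpolywE hq') linear_sum /=; apply: rpred_sum => m _.
rewrite linearZ /=; have [hm|hm] := leqP (mdeg (bmnm m)) D.
  by apply: rpredZ; apply: memv_span; apply/mapP; exists m => //; rewrite mem_filter hm mem_enum.
have : bmnm m \notin msupp q by apply: msize_mdeg_ge; apply: leq_trans hq hm.
by rewrite mcoeff_msupp negbK => /eqP ->; rewrite scale0r rpred0.
Qed.

Lemma msize_mulX (c : {mpoly k[n]}) m : (msize (c * 'X_[m]) <= msize c + mdeg m)%N.
Proof.
have [->|nz] := eqVneq c 0; first by rewrite mul0r msize0.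
rewrite msizeM ?msizeX //; last by apply/eqP => /(congr1 (mcoeff m)); rewrite mcoeffX eqxx mcoeff0; apply/eqP; exact: oner_neq0.
by rewrite addnS.
Qed.

Lemma in_gens p e D (m : M) : (e <= D)%N -> (mdeg (bmnm m) <= D - e)%N ->
  coef (p * 'X_[bmnm m]) \in gens p e D.
Proof.
by move=> he hm; rewrite /gens he; apply/mapP; exists m => //; rewrite mem_filter hm mem_enum.
Qed.

Lemma gen_in_W ps p e (c : {mpoly k[n]}) D : (p, e) \in ps -> (D <= N)%N ->
  (c != 0 -> (msize c + e <= D.+1)%N) -> coef (c * p) \in W ps D.
Proof.
move=> hp hD; have [->|nz] := eqVneq c 0; first by rewrite mul0r linear0 rpred0.
move=> /(_ isT) hc.
have hc1 : (0 < msize c)%N by rewrite lt0n mmeasure_poly_eq0.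
have he : (e <= D)%N by move: hc1 hc; clear; move=> *; lia.
have hcN : (msize c <= N.+1)%N by move: hc hD; clear; move=> *; lia.
rewrite (mpolywE hcN) mulr_suml linear_sum /=; apply: rpred_sum => m _.
rewrite -scalerAl linearZ /=; have [hm|hm] := leqP (mdeg (bmnm m)) (D - e).
  apply: rpredZ; apply: memv_span; apply/flatten_mapP; exists (p, e) => //=.
  by rewrite mulrC; apply: in_gens.
have : bmnm m \notin msupp c by apply: msize_mdeg_ge; move: hc hm; clear; move=> *; lia.
by rewrite mcoeff_msupp negbK => /eqP ->; rewrite scale0r rpred0.
Qed.

Lemma W_sub_P ps D : (forall pe, pe \in ps -> (msize pe.1 <= pe.2.+1)%N) -> (D <= N)%N ->
  (W ps D <= P D)%VS.
Proof.
move=> hps hD; apply/span_subvP => v /flatten_mapP [[p e] /hps /= hp].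
rewrite /gens; case: ifP => // he /mapP [m]; rewrite mem_filter => /andP [hm _] ->.
apply: coef_in_P => //; apply: leq_trans (msize_mulX _ _) _.
by move: hp hm he; clear; move=> *; lia.
Qed.

Lemma W_cons p e ps D : W ((p, e) :: ps) D = (<<gens p e D>> + W ps D)%VS.
Proof. by rewrite /W /= span_cat. Qed.

Lemma W_nil D : W [::] D = 0%VS.
Proof. by rewrite /W /= span_nil. Qed.

Lemma gens_img p e D : (e <= D)%N -> (D <= N)%N -> <<gens p e D>>%VS = (phi p @: P (D - e))%VS.
Proof.
move=> he hD; rewrite limg_span /gens he -map_comp; congr <<_>>%VS; apply/eq_in_map => m.
rewrite mem_filter => /andP [hm _] /=; rewrite lfunE /= /mulc poly_ofK //.
by rewrite msizeX; move: (bmdeg m); clear; move=> *; lia.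
Qed.

Lemma phi_W p e ps D : (forall pe, pe \in ps -> (msize pe.1 <= pe.2.+1)%N) ->
  (msize p <= e.+1)%N -> (e <= D)%N -> (D <= N)%N ->
  (phi p @: W ps (D - e) <= W ps D)%VS.
Proof.
move=> hps hp he hD; rewrite limg_span; apply/span_subvP => v /mapP [w].
move=> /flatten_mapP [[p' e'] hin]; rewrite /gens; case: ifP => // he' /mapP [m].
rewrite mem_filter => /andP [hm _] -> ->; rewrite lfunE /= /mulc.
have hp' := hps _ hin; rewrite /= in hp'.
rewrite poly_ofK; last first.
  by apply: leq_trans (msize_mulX _ _) _; move: hp' hm he he' hD; rewrite /=; clear; move=> *; lia.
rewrite mulrA (mulrC p p') -mulrA mulrC; apply: (gen_in_W hin) => // _.
apply: leq_trans (leq_add (msize_mulX _ _) (leqnn _)) _.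
by move: hp hm he he' hD; rewrite /=; clear; move=> *; lia.
Qed.

Lemma dim_step (A B C : {vspace V}) (f : 'End(V)) : (C <= B)%VS -> (f @: C <= A)%VS ->
  (\dim (A + f @: B) + \dim C <= \dim A + \dim B)%N.
Proof.
move=> hCB hfC.
have eB : B = (B :\: C + C)%VS by rewrite addv_diff; apply/esym/addv_idPl.
have hdim := dimv_cap_compl B C; rewrite (capv_idPr hCB) in hdim.
have hsub : (A + f @: B <= A + f @: (B :\: C))%VS.
  rewrite {1}eB limgD !subv_add addvSl /= addvSr /=.
  exact: subv_trans hfC (addvSl _ _).
have h1 := dimvS hsub.
have h2 := (dimv_add_leqif A (f @: (B :\: C))).1.
have h3 := limg_ker_dim f (B :\: C).
have h4 : (\dim (f @: (B :\: C)) <= \dim (B :\: C))%N by rewrite -h3 leq_addl.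
rewrite -hdim (addnC _ (\dim C)) addnCA leq_add2l.
exact: leq_trans h1 (leq_trans h2 (leq_add (leqnn _) h4)).
Qed.

Definition q ps D := (\dim (P D) - \dim (W ps D))%N.

Lemma q_step (p : {mpoly k[n]}) (e : nat) (ps : seq ({mpoly k[n]} * nat)) (D : nat) : (forall pe, pe \in (p, e) :: ps -> (msize pe.1 <= pe.2.+1)%N) ->
  (e <= D)%N -> (D <= N)%N -> (q ps D <= q ((p, e) :: ps) D + q ps (D - e))%N.
Proof.
move=> hps he hD.
have hps' : forall pe, pe \in ps -> (msize pe.1 <= pe.2.+1)%N.
  by move=> pe hpe; apply: hps; rewrite inE hpe orbT.
have hp : (msize p <= e.+1)%N by apply: (hps (p, e)); rewrite inE eqxx.
have hW1 := dimvS (W_sub_P hps hD).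
have hW2 := dimvS (W_sub_P hps' (leq_trans (leq_subr e D) hD)).
have hW3 := dimvS (W_sub_P hps' hD).
have := dim_step (W_sub_P hps' (leq_trans (leq_subr e D) hD)) (phi_W hps' hp he hD).
rewrite -gens_img // addvC -W_cons /q.
move: hW1 hW2 hW3; clear; move=> *; lia.
Qed.

Lemma q_small p e ps D : (D < e)%N -> q ((p, e) :: ps) D = q ps D.
Proof.
by move=> he; rewrite /q W_cons /gens leqNgt he span_nil add0v.
Qed.

Lemma chain (ps : seq ({mpoly k[n]} * nat)) :
  (forall pe, pe \in ps -> (0 < pe.2)%N && (msize pe.1 <= pe.2.+1)%N) ->
  forall x, (x <= N)%N -> (\dim (P x) <= iter (size ps) Sf (q ps) x)%N.
Proof.
elim: ps => [|[p e] ps IH] hps x hx.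
  by rewrite /= /q W_nil dimv0 subn0.
have hps' : forall pe, pe \in ps -> (0 < pe.2)%N && (msize pe.1 <= pe.2.+1)%N.
  by move=> pe hpe; apply: hps; rewrite inE hpe orbT.
have hall : forall pe, pe \in (p, e) :: ps -> (msize pe.1 <= pe.2.+1)%N.
  by move=> pe /hps /andP [].
have /andP [he _] : (0 < e)%N && (msize p <= e.+1)%N by apply: (hps (p, e)); rewrite inE eqxx.
apply: leq_trans (IH hps' x hx) _; rewrite [size _]/= iterSr.
apply: iter_mono => D hD; apply: (S_step he (N := N)) => //.
- by move=> D' hD' heD'; apply: q_step.
- by move=> D' hD' heD'; rewrite q_small.
- exact: leq_trans hD hx.
Qed.

Lemma P_full : P N = fullv.
Proof.
apply/eqP; rewrite eqEsubv subvf /=; apply/subvP => v _.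
rewrite -(coefK v) /poly_of linear_sum /=; apply: rpred_sum => m _.
rewrite linearZ /=; apply: rpredZ; apply: memv_span; apply/mapP; exists m => //.
by rewrite mem_filter mem_enum andbT -ltnS bmdeg.
Qed.

Lemma dimP_N : \dim (P N) = #|{: M}|.
Proof. by rewrite P_full dimvf /dim /= mul1n. Qed.

Definition tideal_hyp (ps : seq ({mpoly k[n]} * nat)) (a : nat) :=
  forall l : 'I_n, exists cs : seq ({mpoly k[n]} * ({mpoly k[n]} * nat)),
    'X_l ^+ a = \sum_(ce <- cs) ce.1 * ce.2.1 /\
    forall ce, ce \in cs -> ce.2 \in ps /\ (ce.1 != 0 -> (msize ce.1 + ce.2.2 <= a.+1)%N).

Lemma divmono_in_W ps a D (m : M) (l : 'I_n) : tideal_hyp ps a -> (D <= N)%N ->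
  (mdeg (bmnm m) <= D)%N -> (a <= bmnm m l)%N -> coef 'X_[bmnm m] \in W ps D.
Proof.
move=> hyp hD hm hl; set m' := (bmnm m - U_(l) *+ a)%MM.
have em : bmnm m = (U_(l) *+ a + m')%MM.
  apply/mnmP => i; rewrite mnmDE mnmBE mulmnE mnm1E.
  by case: (eqVneq l i) => [<-|_] /=; move: hl; clear; move=> *; lia.
have hdm : (mdeg (bmnm m) = a + mdeg m')%N by rewrite {1}em mdegD mdegMn mdeg1 mul1n.
rewrite em mpolyXD -mpolyXn.
have [cs [ecs hcs]] := hyp l; rewrite ecs mulr_suml linear_sum /=.
rewrite big_seq; apply: rpred_sum => [[c [p e]]] hce; have [/= hin hdeg] := hcs _ hce.
rewrite /= -mulrA (mulrC p) mulrA; apply: (gen_in_W hin) => // hz.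
have hc : c != 0 by apply: contraNneq hz => ->; rewrite mul0r.
apply: leq_trans (leq_add (msize_mulX _ _) (leqnn _)) _.
by move: (hdeg hc) hdm hm; rewrite /=; clear; move=> *; lia.
Qed.

Lemma q_bound ps a D : tideal_hyp ps a -> (D <= N)%N -> (q ps D <= a.+1 ^ n)%N.
Proof.
move=> hyp hD.
pose Pr := fun m : M => (mdeg (bmnm m) <= D)%N && [forall l, bmnm m l < a]%N.
pose nd := [seq coef 'X_[bmnm m] | m <- allM & Pr m].
have hsub : (P D <= W ps D + <<nd>>)%VS.
  apply/span_subvP => v /mapP [m]; rewrite mem_filter => /andP [hm _] ->.
  case hf: [forall l, bmnm m l < a]%N.
    apply: subv_trans (addvSr _ _); apply: memv_span; apply/mapP; exists m => //.
    by rewrite mem_filter /Pr hm hf mem_enum.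
  move/negbT: hf; rewrite negb_forall => /existsP [l]; rewrite -leqNgt => hl.
  by apply: subv_trans (addvSl _ _); apply: divmono_in_W hl.
have h1 := dimvS hsub.
have h2 := (dimv_add_leqif (W ps D) <<nd>>%VS).1.
have h3 := dim_span nd.
have h4 : (size nd <= a.+1 ^ n)%N.
  pose mk := fun f : {ffun 'I_n -> 'I_a.+1} => [multinom (f i : nat) | i < n].
  have -> : size nd = size [seq bmnm m | m <- allM & Pr m] by rewrite !size_map.
  have -> : (a.+1 ^ n = #|{ffun 'I_n -> 'I_a.+1}|)%N by rewrite card_ffun !card_ord.
  rewrite cardE -(size_map mk).
  apply: uniq_leq_size.
    have hu : uniq allM := enum_uniq _.
    rewrite map_inj_uniq; first exact: filter_uniq hu.
    move=> x y /= h; exact: val_inj h.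
  move=> mu /mapP [m]; rewrite mem_filter => /andP [/andP [_ /forallP hm] _] ->.
  apply/mapP; exists [ffun i => inord (bmnm m i)]; first by rewrite mem_enum.
  by apply/mnmP => i; rewrite mnmE ffunE inordK //; exact: ltnW (hm i).
rewrite /q leq_subLR; apply: leq_trans h1 (leq_trans h2 _); rewrite leq_add2l; exact: leq_trans h3 h4.
Qed.
End Core.

Lemma card_lower (n Kk : nat) : (Kk ^ n <= #|{: 'X_{1..n < (n * Kk).+1}}|)%N.
Proof.
have hb : forall f : {ffun 'I_n -> 'I_Kk}, (mdeg [multinom (f i : nat) | i < n] < (n * Kk).+1)%N.
  move=> f; rewrite ltnS mdegE.
  have h : (\sum_(i < n) [multinom (f i : nat) | i < n] i <= \sum_(i < n) Kk)%N.
    by apply: leq_sum => i _; rewrite mnmE; exact: ltnW (ltn_ord _).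
  by apply: leq_trans h _; rewrite big_const_ord iter_addn_0 mulnC.
pose g := fun f => BMultinom (hb f).
have -> : (Kk ^ n = #|{ffun 'I_n -> 'I_Kk}|)%N by rewrite card_ffun !card_ord.
apply: (@leq_card _ _ g) => f1 f2 /(congr1 (@bmnm _ _)) /= /mnmP h.
by apply/ffunP => i; apply: val_inj; have := h i; rewrite !mnmE.
Qed.

Theorem abstract_bound (k : fieldType) (n a : nat) (ps : seq ({mpoly k[n]} * nat)) :
  (forall pe, pe \in ps -> (0 < pe.2)%N && (msize pe.1 <= pe.2.+1)%N) ->
  tideal_hyp ps a -> (n <= size ps)%N.
Proof.
move=> hps hyp; rewrite leqNgt; apply/negP => hlt.
set r := size ps in hlt.
set B := (a.+1 ^ n)%N.
set Y := (n.+1 ^ n.-1)%N.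
set Kk := (B * Y + 1)%N.
set N := (n * Kk)%N.
have h1 := card_lower n Kk.
have h2 := @chain k n N ps hps N (leqnn N); rewrite dimP_N in h2.
have h3 := @iter_bound r (q N ps) B N (fun D hD => q_bound hyp hD).
have hr : (r <= n.-1)%N by move: hlt; clear; move=> *; lia.
have h4 : (N.+1 ^ r <= N.+1 ^ n.-1)%N by apply: leq_pexp2l.
have hK : (0 < Kk)%N by rewrite /Kk addn1.
have h5 : (N.+1 <= n.+1 * Kk)%N by rewrite /N mulSn addnC; move: hK; clear; move=> *; lia.
have h6 : (N.+1 ^ n.-1 <= (n.+1 * Kk) ^ n.-1)%N by apply: leq_expn.
rewrite expnMn -/Y in h6.
have hn : n = (n.-1).+1 by move: hlt; clear; move=> *; lia.
have hX : (0 < Kk ^ n.-1)%N by rewrite expn_gt0 hK.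
have H : (Kk ^ n <= B * (Y * Kk ^ n.-1))%N.
  apply: leq_trans h1 (leq_trans h2 (leq_trans h3 _)).
  by rewrite leq_mul2l (leq_trans h4 h6) orbT.
rewrite {1}hn expnS in H.
move: (Kk ^ n.-1)%N hX H => X hX H.
move: H; rewrite /Kk mulnDl mul1n mulnA -{2}[(B * Y * X)%N]addn0 leq_add2l leqn0 => /eqP X0.
by rewrite X0 in hX.
Qed.

Section App.
Variables (k : fieldType) (n : nat).

Lemma homog_msize (p : {mpoly k[n]}) e : is_homog_deg e p -> (msize p <= e.+1)%N.
Proof.
move=> hp; have [->|nz] := eqVneq p 0; first by rewrite msize0.
rewrite -mlead_deg //; move/dhomogP: hp => /(_ _ (mlead_supp nz)) ->; exact: leqnn.
Qed.

Lemma homog_deriv_msize (p : {mpoly k[n]}) e l : is_homog_deg e p -> (msize (p^`M(l)) <= e)%N.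
Proof.
move=> hp; have [->|nz] := eqVneq (p^`M(l)) 0; first by rewrite msize0.
rewrite -mlead_deg //; have := mlead_supp nz; rewrite mcoeff_msupp mcoeff_deriv.
set m := mlead _ => hm.
have hm' : (m + U_(l))%MM \in msupp p.
  by rewrite mcoeff_msupp; apply: contraNneq hm => ->; rewrite mul0rn.
move/dhomogP: hp => /(_ _ hm') he; rewrite -he /=; have := mdegD m U_(l); rewrite mdeg1 addn1 => <-; exact: leqnn.
Qed.

Lemma diag_homog d (a : 'I_n -> k) : is_homog_deg d (diag_form d a).
Proof.
rewrite /is_homog_deg /diag_form; apply: rpred_sum => i _; apply: dhomogZ.
by rewrite mpolyXn dhomogX /= mdegMn mdeg1 mul1n.
Qed.

Lemma diag_deriv d (a : 'I_n -> k) l : (0 < d)%N ->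
  (diag_form d a)^`M(l) = (a l * d%:R) *: 'X_l ^+ d.-1.
Proof.
move=> hd; rewrite /diag_form raddf_sum /= (bigD1 l) //= big1 ?addr0; last first.
  move=> i hi; rewrite mderivZ mpolyXn mderivX mulmnE mnm1E (negbTE hi) mul0n.
  by rewrite scale0r scaler0.
rewrite mderivZ mpolyXn mderivX mulmnE mnm1E eqxx mul1n scalerA mpolyXn.
congr (_ *: 'X_[_]); apply/mnmP => i; rewrite mnmBE !mulmnE mnm1E.
by case: (l == i) => /=; move: hd; clear; move=> *; lia.
Qed.
End App.

Lemma size_flatten2 (T : Type) (I : Type) (x y : I -> T) (l : seq I) :
  size (flatten [seq [:: x i; y i] | i <- l]) = (2 * size l)%N.
Proof. by elim: l => //= i l ->; rewrite mulnS. Qed.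

Unset Implicit Arguments.
Theorem proposition3p3 (k : fieldType) (n d : nat) (a : 'I_n -> k)
    (hd : (0 < d)%N)
    (hchar : forall p : nat, p \in [pchar k] -> ~~ (p %| d)%N)
    (ha : forall i, a i != 0) :
  forall s : nat, str_decomp d (diag_form d a) s -> (n <= 2 * s)%N.
Proof.
move=> s [g [h [hg [hh hf]]]].
have [eg heg] := fin_all_exists hg.
have [eh heh] := fin_all_exists hh.
pose kept i := (eg i + eh i == d)%N.
pose g' i := if kept i then g i else 0.
pose h' i := if kept i then h i else 0.
pose eg' i := if kept i then eg i else 1%N.
pose eh' i := if kept i then eh i else 1%N.
pose ps := flatten [seq [:: (g' i, eg' i); (h' i, eh' i)] | i <- enum 'I_s].
have hsize : size ps = (2 * s)%N by rewrite size_flatten2 size_enum_ord.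
have hfe : diag_form d a = \sum_i g' i * h' i.
  apply/mpolyP => mu; rewrite [RHS]raddf_sum /=.
  have [hmu|hmu] := eqVneq (mdeg mu) d.
    rewrite hf raddf_sum /=; apply: eq_bigr => i _; rewrite /g' /h'.
    case: ifP => hk //; rewrite mul0r mcoeff0.
    apply: (dhomog_nemf_coeff (d := (eg i + eh i)%N)).
      by apply: dhomogM; [exact: (heg i).2 | exact: (heh i).2].
    by change (mdeg mu != (eg i + eh i)%N); rewrite hmu eq_sym; apply/negbT.
  rewrite (dhomog_nemf_coeff (diag_homog d a) hmu) big1 // => i _.
  rewrite /g' /h'; case: ifP => hk; last by rewrite mul0r mcoeff0.
  apply: (dhomog_nemf_coeff (d := (eg i + eh i)%N)).
    by apply: dhomogM; [exact: (heg i).2 | exact: (heh i).2].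
  by rewrite (eqP hk).
have hps : forall pe, pe \in ps -> (0 < pe.2)%N && (msize pe.1 <= pe.2.+1)%N.
  move=> pe /flatten_mapP [i _]; rewrite !inE => /orP [] /eqP -> /=.
    rewrite /g' /eg'; case: ifP => hk; last by rewrite msize0.
    rewrite homog_msize ?andbT; last exact: (heg i).2.
    by move: (eqP hk) (heh i).1; clear; move=> *; lia.
  rewrite /h' /eh'; case: ifP => hk; last by rewrite msize0.
  rewrite homog_msize ?andbT; last exact: (heh i).2.
  by move: (eqP hk) (heg i).1; clear; move=> *; lia.
have hd0 : (d%:R : k) != 0.
  apply/negP => /eqP hz; have [p hp] := natf0_pchar hd (introT eqP hz).
  by have := hchar p hp; rewrite (dvdn_pcharf hp) hz eqxx.
have hyp : tideal_hyp ps d.-1.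
  move=> l; pose c := (a l * d%:R)^-1.
  exists (flatten [seq [:: (c *: (h' i)^`M(l), (g' i, eg' i)); (c *: (g' i)^`M(l), (h' i, eh' i))]
                  | i <- enum 'I_s]).
  split.
    have := congr1 (mderiv l) hfe; rewrite diag_deriv // raddf_sum /= => hD.
    have -> : 'X_l ^+ d.-1 = c *: ((a l * d%:R) *: 'X_l ^+ d.-1).
      by rewrite scalerA mulVf ?scale1r // mulf_neq0.
    rewrite hD big_flatten /= big_map scaler_sumr.
    rewrite big_enum /=; apply: eq_bigr => i _.
    rewrite !big_cons big_nil addr0 mderivM scalerDr -!scalerAl addrC /=.
    by rewrite (mulrC (g' i)).
  have hd1 : d.-1.+1 = d by move: hd; clear; move=> *; lia.
  move=> ce /flatten_mapP [i _]; rewrite !inE => /orP [] /eqP -> /=; split.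
  - by apply/flatten_mapP; exists i; rewrite ?mem_enum // !inE eqxx.
  - rewrite /h' /eg' hd1; case: ifP => hk; last by rewrite mderiv0 scaler0 eqxx.
    move=> _; apply: leq_trans (leq_add (msizeZ_le _ _) (leqnn _)) _.
    apply: leq_trans (leq_add (homog_deriv_msize l (heh i).2) (leqnn _)) _.
    by rewrite addnC (eqP hk).
  - by apply/flatten_mapP; exists i; rewrite ?mem_enum // !inE eqxx orbT.
  - rewrite /g' /eh' hd1; case: ifP => hk; last by rewrite mderiv0 scaler0 eqxx.
    move=> _; apply: leq_trans (leq_add (msizeZ_le _ _) (leqnn _)) _.
    apply: leq_trans (leq_add (homog_deriv_msize l (heg i).2) (leqnn _)) _.
    by rewrite (eqP hk).
by rewrite -hsize; apply: abstract_bound hps hyp.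
Qed.
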